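(* Let $X\subset\mathbb{R}_+$ be a Borel set with $0\in X$, let $\kappa\ge0$ and $\delta\in(0,1)$, and let $x_0>0$ satisfy $x_0\ge\frac{2\delta\kappa}{1-\delta}$. Let $\bar p$ be the stationary decision rule with $\bar p(y)=\frac{1-\delta}{2-\delta}$ for all $y\ge x_0$. Then: (a) $R_{\bar p}(x_0)\ge 1/4$; (b) if $\sup X=\infty$, then $\bar p$ is dynamically robust, i.e. $R_{\bar p}(x_0)=\sup_pR_p(x_0)$, the supremum being over all stationary decision rules.
   Context: Search with additive-multiplicative costs. Fix a Borel set $X\subset\mathbb{R}_+$ with $0\in X$, an additive cost $\kappa\ge 0$ and a discount factor $\delta\in(0,1]$ with $\kappa+(1-\delta)>0$, and an outside option $x_0>0$. An environment is a probability distribution $F$ on $X$; alternatives $x_1,x_2,\dots$ are i.i.d. with law $F$, and the best-so-far alternative after round $t$ is $y_t=\max\{x_0,\dots,x_t\}$. In each round the individual either stops and consumes the best-so-far alternative, or proceeds to the next round, incurring cost $\kappa$ with all future payoffs discounted by $\delta$; thus stopping at round $t\ge1$ yields, from the perspective of round $0$, $-(\delta+\dots+\delta^t)\kappa+\delta^ty_t$. A stationary decision rule is a function $p$ giving the stopping probability $p(y)\in[0,1]$ as a function of the current best-so-far alternative $y$. For an environment $F$ and a current best-so-far alternative $y$, $U_p(F,y)$ denotes the expected payoff of $p$, which satisfies $U_p(F,y)=p(y)y+(1-p(y))\delta\big(-\kappa+\int U_p(F,\max\{y,x\})\,dF(x)\big)$, and $V(F,y)$ is the optimal (supremal) expected payoff,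 satisfying $V(F,y)=\max_{q\in[0,1]}\big(qy+(1-q)\delta(-\kappa+\int V(F,\max\{y,x\})\,dF(x))\big)$. A binary environment $F_{(z,\sigma)}$ is the lottery giving $0$ with probability $1-\sigma$ and $z$ with probability $\sigma$; $\mathcal B_X=\{F_{(z,\sigma)}:z\in X,\sigma\in[0,1]\}$. The performance ratio of $p$ is $R_p(x_0)=\inf_{y\ge x_0}\inf_{F\in\mathcal B_X}U_p(F,y)/V(F,y)$. *)

(* Defs.v *)
From HB Require Import structures.
From mathcomp Require Import all_boot all_order all_algebra.
From mathcomp Require Import all_classical all_reals all_analysis.
From Stdlib Require Import ClassicalEpsilon.

Set Implicit Arguments. Unset Strict Implicit. Unset Printing Implicit Defensive.
Import Order.TTheory GRing.Theory Num.Theory.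
Local Open Scope classical_set_scope.
Local Open Scope ring_scope.

Section Search.
Variable R : realType.

(* Integral of g(max{y,x}) dF(x) for the binary environment F_(z,sigma):
   0 with probability 1-sigma, z with probability sigma. *)
Definition bint (z sigma : R) (g : R -> R) (y : R) : R :=
  (1 - sigma) * g (Num.max y 0) + sigma * g (Num.max y z).

Definition is_rule (p : R -> R) : Prop := forall y, 0 <= p y <= 1.

Definition U_eq (kappa delta : R) (p : R -> R) (z sigma : R) (U : R -> R) : Prop :=
  forall y, 0 <= y ->
    U y = p y * y + (1 - p y) * (delta * (- kappa + bint z sigma U y)).

(* The Bellman equation for the optimal payoff V(F_(z,sigma), .):
   max over q in [0,1] of q*y + (1-q)*w, i.e. max(y, w). *)
Definition V_eq (kappa delta : R) (z sigma : R) (V : R -> R) : Prop :=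
  forall y, 0 <= y ->
    V y = Num.max y (delta * (- kappa + bint z sigma V y)).

Definition Upay (kappa delta : R) (p : R -> R) (z sigma : R) : R -> R :=
  epsilon (inhabits (fun _ : R => 0)) (U_eq kappa delta p z sigma).

Definition Vopt (kappa delta : R) (z sigma : R) : R -> R :=
  epsilon (inhabits (fun _ : R => 0)) (V_eq kappa delta z sigma).

Definition perf (X : set R) (kappa delta : R) (p : R -> R) (x0 : R) : \bar R :=
  ereal_inf [set r : \bar R | exists y z sigma : R,
    [/\ x0 <= y, X z, 0 <= sigma <= 1 &
     r = (Upay kappa delta p z sigma y / Vopt kappa delta z sigma y)%:E]].

End Search.

(* Main.v *)
Require Import Defs.
From HB Require Import structures.
From mathcomp Require Import all_boot all_order all_algebra.
From mathcomp Require Import all_classical all_reals all_analysis.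
From mathcomp Require Import ring lra.
From Stdlib Require Import ClassicalEpsilon.
Import Order.TTheory GRing.Theory Num.Theory.
Local Open Scope classical_set_scope.
Local Open Scope ring_scope.

Section S.
Variable R : realType.

Lemma U_ex (k d : R) p z s : is_rule p -> 0 <= k -> 0 < d < 1 -> 0 <= s <= 1 ->
  exists U, U_eq k d p z s U.
Proof.
move=> hp hk /andP[d0 d1] /andP[s0 s1].
pose U0 y := (p y * y - (1 - p y) * d * k) / (1 - (1 - p y) * d).
exists (fun y => if z <= y then U0 y else
   (p y * y - (1 - p y) * d * k + (1 - p y) * d * s * U0 z) / (1 - (1 - p y) * d * (1 - s))).
move=> y y0; rewrite /bint (max_l y0).
have /andP[p0 p1] := hp y.
case: (leP z y) => hzy; last rewrite lexx.
- have hD : 1 - (1 - p y) * d != 0 by rewrite lt0r_neq0 //; nra.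
  rewrite /= hzy /U0; field => //.
- have hq : 0 <= (1 - p y) * (1 - s) <= 1 by apply/andP; split; nra.
  have hD : 1 - (1 - p y) * d * (1 - s) != 0 by rewrite lt0r_neq0 //; nra.
  have /andP[pz0 pz1] := hp z.
  have hD' : 1 - (1 - p z) * d != 0 by rewrite lt0r_neq0 //; nra.
  by rewrite /U0 /=; field; rewrite hD hD'.
Qed.

Lemma V_ex (k d : R) z s : 0 <= k -> 0 < d < 1 -> 0 <= s <= 1 ->
  exists V, V_eq k d z s V.
Proof.
move=> hk /andP[d0 d1] /andP[s0 s1].
have hDp : 0 < 1 - d * (1 - s) by nra.
pose w := d * (s * z - k) / (1 - d * (1 - s)).
exists (fun y => if z <= y then y else Num.max y w).
move=> y y0; rewrite /bint (max_l y0).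
case: (leP z y) => hzy; last rewrite lexx.
- rewrite /= hzy max_l //; nra.
- rewrite /=; case: (leP y w) => hyw.
  + have -> : d * (- k + ((1 - s) * w + s * z)) = w.
      by rewrite /w; field; rewrite lt0r_neq0.
    by rewrite max_r.
  + rewrite max_l //.
    have : d * (s * z - k) < y * (1 - d * (1 - s)) by rewrite -ltr_pdivrMr.
    nra.
Qed.

Lemma Upay_eq (k d : R) p z s : is_rule p -> 0 <= k -> 0 < d < 1 -> 0 <= s <= 1 ->
  U_eq k d p z s (Upay k d p z s).
Proof. by move=> *; apply: epsilon_spec; apply: U_ex. Qed.

Lemma Vopt_eq (k d : R) z s : 0 <= k -> 0 < d < 1 -> 0 <= s <= 1 ->
  V_eq k d z s (Vopt k d z s).
Proof. by move=> *; apply: epsilon_spec; apply: V_ex. Qed.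

Lemma U_self (k d : R) p z s U y : U_eq k d p z s U -> 0 <= y -> z <= y ->
  U y * (1 - (1 - p y) * d) = p y * y - (1 - p y) * d * k.
Proof.
move=> HU y0 zy; have := HU y y0; rewrite /bint (max_l y0) (max_l zy) => E.
set u := U y in E *; nra.
Qed.

Lemma U_below (k d : R) p z s U y : U_eq k d p z s U -> 0 <= y -> y < z ->
  U y * (1 - (1 - p y) * d * (1 - s)) = p y * y - (1 - p y) * d * k + (1 - p y) * d * s * U z.
Proof.
move=> HU y0 zy; have := HU y y0; rewrite /bint (max_l y0) (max_r (ltW zy)) => E.
set u := U y in E *; nra.
Qed.

Lemma V_self (k d : R) z s V y : 0 <= k -> 0 < d < 1 -> V_eq k d z s V -> 0 <= y -> z <= y ->
  V y = y.
Proof.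
move=> hk /andP[d0 d1] HV y0 zy; have := HV y y0; rewrite /bint (max_l y0) (max_l zy) => E.
move: E; case: (leP y (d * (- k + ((1 - s) * V y + s * V y)))) => h E; last by [].
nra.
Qed.

Lemma V_below (k d : R) z s V y : 0 <= k -> 0 < d < 1 -> V_eq k d z s V -> 0 <= y -> y < z ->
  [/\ y <= V y, d * (s * z - k) <= V y * (1 - d * (1 - s)) &
     V y = y \/ V y * (1 - d * (1 - s)) = d * (s * z - k)].
Proof.
move=> hk hd HV y0 zy.
have Vz : V z = z by apply: (V_self _ _ _ _ _ _ hk hd HV) => //; apply: le_trans (ltW zy).
have := HV y y0; rewrite /bint (max_l y0) (max_r (ltW zy)) Vz.
case: (leP y (d * (- k + ((1 - s) * V y + s * z)))) => h E.
- split; first by rewrite E.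
  + nra.
  + right; nra.
- rewrite E; split => //; last by left.
  nra.
Qed.

Lemma alg1 (a b y z D Uy Uz : R) : 0 < a -> 0 <= b -> 0 <= D -> 2 * D <= a * y -> y < z ->
  Uy * (2 * a + b) = a * y - D + b * Uz -> Uz * (2 * a) = a * z - D -> y <= 4 * Uy.
Proof.
move=> a0 b0 D0 Dy yz E1 E2.
have e : 2 * a * (2 * a + b) * (4 * Uy - y) =
   4 * (2 * a * (a * y - D) + b * (a * z - D)) - 2 * a * (2 * a + b) * y.
  apply/eqP; rewrite -subr_eq0; apply/eqP.
  transitivity (8 * a * (Uy * (2 * a + b) - (a * y - D + b * Uz)) + 4 * b * (Uz * (2 * a) - (a * z - D))); first ring.
  by rewrite E1 E2 !subrr; ring.
have hP : 0 <= 4 * (2 * a * (a * y - D) + b * (a * z - D)) - 2 * a * (2 * a + b) * y.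
  have h1 : 0 <= a * b * (z - y) by apply: mulr_ge0; [apply: mulr_ge0|]; lra.
  have h2 : b * (2 * D) <= b * (a * y) by apply: ler_wpM2l.
  have h3 : a * (2 * D) <= a * (a * y) by apply: ler_wpM2l => //; lra.
  nra.
rewrite -e in hP.
have hpos : 0 < 2 * a * (2 * a + b) by apply: mulr_gt0; lra.
rewrite (pmulr_rge0 _ hpos) in hP; lra.
Qed.

Lemma alg2 (a b y z D Uy Uz Vy : R) : 0 < a -> 0 <= b -> 0 <= D -> 2 * D <= a * y -> y < z ->
  Uy * (2 * a + b) = a * y - D + b * Uz -> Uz * (2 * a) = a * z - D ->
  Vy * (a + b) = b * z - D -> Vy <= 4 * Uy.
Proof.
move=> a0 b0 D0 Dy yz E1 E2 E3.
have e : 2 * a * (2 * a + b) * (a + b) * (4 * Uy - Vy) =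
   4 * (a + b) * (2 * a * (a * y - D) + b * (a * z - D)) - 2 * a * (2 * a + b) * (b * z - D).
  apply/eqP; rewrite -subr_eq0; apply/eqP.
  transitivity (8 * a * (a + b) * (Uy * (2 * a + b) - (a * y - D + b * Uz))
     + 4 * (a + b) * b * (Uz * (2 * a) - (a * z - D)) - 2 * a * (2 * a + b) * (Vy * (a + b) - (b * z - D))); first ring.
  by rewrite E1 E2 E3 !subrr; ring.
have hP : 0 <= 4 * (a + b) * (2 * a * (a * y - D) + b * (a * z - D)) - 2 * a * (2 * a + b) * (b * z - D).
  have y0 : 0 <= y by nra.
  have h1 : 0 <= a * b * b * (z - y) by apply: mulr_ge0; [apply: mulr_ge0; [apply: mulr_ge0|]|]; lra.
  have h2 : b * b * (2 * D) <= b * b * (a * y) by apply: ler_wpM2l => //; nra.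
  have h3 : a * a * (2 * D) <= a * a * (a * y) by apply: ler_wpM2l => //; nra.
  have h4 : a * b * (2 * D) <= a * b * (a * y) by apply: ler_wpM2l => //; nra.
  have h5 : 0 <= a * a * a * y by nra.
  have h6 : 0 <= a * a * b * y by nra.
  nra.
rewrite -e in hP.
have hpos : 0 < 2 * a * (2 * a + b) * (a + b) by apply: mulr_gt0; [apply: mulr_gt0|]; lra.
rewrite (pmulr_rge0 _ hpos) in hP; lra.
Qed.


Lemma part_a_point (k d x0 : R) pbar y z s :
  0 <= k -> 0 < d < 1 -> 0 < x0 -> 2 * d * k / (1 - d) <= x0 -> is_rule pbar ->
  (forall y, x0 <= y -> pbar y = (1 - d) / (2 - d)) ->
  x0 <= y -> 0 <= z -> 0 <= s <= 1 ->
  1 / 4 <= Upay k d pbar z s y / Vopt k d z s y.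
Proof.
move=> hk hd hx0 hxk hp hc xy z0 hs.
have /andP[d0 d1] := hd.
have HU := Upay_eq _ _ _ z _ hp hk hd hs; have HV := Vopt_eq _ _ z _ hk hd hs.
set U := Upay k d pbar z s in HU *; set V := Vopt k d z s in HV *.
have y0 : 0 < y by apply: lt_le_trans xy.
have a0 : 0 < 1 - d by lra.
have hD : 2 * (d * k) <= (1 - d) * y.
  rewrite ler_pdivrMr // in hxk; nra.
have d2 : 2 - d != 0 by rewrite lt0r_neq0 //; lra.
have Uself : forall t, x0 <= t -> z <= t -> U t * (2 * (1 - d)) = (1 - d) * t - d * k.
  move=> t xt zt; have := U_self _ _ _ _ _ _ _ HU (le_trans (ltW hx0) xt) zt; rewrite hc // => E.
  transitivity ((U t * (1 - (1 - (1 - d) / (2 - d)) * d)) * (2 - d)); first by field.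
  by rewrite E; field.
case: (leP z y) => zy.
- rewrite (V_self _ _ _ _ _ _ hk hd HV (ltW y0) zy) ler_pdivlMr //.
  have := Uself y xy zy; nra.
- have Ez := Uself z (le_trans xy (ltW zy)) (lexx z).
  have Ey : U y * (2 * (1 - d) + d * s) = (1 - d) * y - d * k + d * s * U z.
    have := U_below _ _ _ _ _ _ _ HU (ltW y0) zy; rewrite hc // => E.
    transitivity ((U y * (1 - (1 - (1 - d) / (2 - d)) * d * (1 - s))) * (2 - d)); first by field.
    by rewrite E; field.
  have [Vy1 _ Vy3] := V_below _ _ _ _ _ _ hk hd HV (ltW y0) zy.
  have bs : 0 <= d * s by apply: mulr_ge0; lra.
  have Dk : 0 <= d * k by apply: mulr_ge0; lra.
  case: Vy3 => Vy.
  + rewrite Vy ler_pdivlMr //.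
    have := alg1 _ _ _ _ _ _ _ a0 bs Dk hD zy Ey Ez; lra.
  + rewrite ler_pdivlMr; last by apply: lt_le_trans Vy1.
    have E3 : V y * ((1 - d) + d * s) = d * s * z - d * k.
      transitivity (V y * (1 - d * (1 - s))); first ring.
      by rewrite Vy; ring.
    have := alg2 _ _ _ _ _ _ _ _ a0 bs Dk hD zy Ey Ez E3; lra.
Qed.

Definition Af (d t : R) := t / (1 - (1 - t) * d).

Lemma Af_bnd (d t : R) : 0 < d < 1 -> 0 <= t <= 1 -> 0 <= Af d t <= 1.
Proof.
move=> /andP[d0 d1] /andP[t0 t1].
have Dq : 0 < 1 - (1 - t) * d by nra.
rewrite /Af; apply/andP; split; first by apply: divr_ge0 => //; lra.
by rewrite ler_pdivrMr // mul1r; nra.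
Qed.

Lemma L0 {d q z k Uz : R} : 0 < d < 1 -> 0 <= k -> 0 <= q <= 1 ->
  Uz * (1 - (1 - q) * d) = q * z - (1 - q) * d * k -> Uz <= Af d q * z.
Proof.
move=> /andP[d0 d1] k0 /andP[q0 q1] HUz.
have Dq0 : 0 < 1 - (1 - q) * d by nra.
rewrite /Af mulrAC ler_pdivlMr // HUz.
have : 0 <= (1 - q) * d * k by apply: mulr_ge0; [apply: mulr_ge0|]; lra.
lra.
Qed.

Lemma L1 {d P s k y Uy Uz W : R} : 0 < d -> 0 <= k -> 0 <= P <= 1 -> 0 <= s ->
  Uy * (1 - (1 - P) * d * (1 - s)) = P * y - (1 - P) * d * k + (1 - P) * d * s * Uz ->
  Uz <= W -> Uy * (1 - (1 - P) * d * (1 - s)) <= P * y + (1 - P) * d * s * W.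
Proof.
move=> d0 k0 /andP[P0 P1] s0 HUy hW; rewrite HUy.
have : (1 - P) * d * s * Uz <= (1 - P) * d * s * W.
  by apply: ler_wpM2l => //; apply: mulr_ge0; [apply: mulr_ge0|]; lra.
have : 0 <= (1 - P) * d * k by apply: mulr_ge0; [apply: mulr_ge0|]; lra.
lra.
Qed.

Lemma L2 {r d M D1 D2 Uy Vy B : R} : 0 < r -> 0 < d -> 0 < M -> 0 < D1 -> 0 < D2 ->
  d * M <= Vy * D2 -> r * Vy <= Uy -> Uy * D1 <= B -> r <= B * D2 / (d * M * D1).
Proof.
move=> r0 d0 M0 D10 D20 hV rV hU.
rewrite ler_pdivlMr; last by apply: mulr_gt0 => //; apply: mulr_gt0.
have h1 : r * (d * M) <= r * (Vy * D2) by apply: ler_wpM2l; lra.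
have h2 : r * Vy * D2 <= Uy * D2 by apply: ler_wpM2r; lra.
have h3 : r * (d * M) * D1 <= Uy * D2 * D1.
  by apply: ler_wpM2r; [lra| rewrite mulrA in h1; lra].
have h4 : Uy * D1 * D2 <= B * D2 by apply: ler_wpM2r; lra.
have -> : r * (d * M * D1) = r * (d * M) * D1 by ring.
rewrite (_ : Uy * D2 * D1 = Uy * D1 * D2) in h3; last by ring.
lra.
Qed.

Lemma L3 {d P s k y z aq M : R} : 0 < d -> 0 < M -> M = s * z - k ->
  1 - (1 - P) * d * (1 - s) != 0 ->
  (P * y + (1 - P) * d * s * (aq * z)) * (1 - d * (1 - s)) / (d * M * (1 - (1 - P) * d * (1 - s))) =
  (y / (d * M)) * (P * (1 - d * (1 - s)) / (1 - (1 - P) * d * (1 - s)))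
  + aq * ((1 - P) * (1 - d * (1 - s)) / (1 - (1 - P) * d * (1 - s))) * (1 + k / M).
Proof.
move=> d0 M0 EM hD1.
have hM : M != 0 by rewrite lt0r_neq0.
have -> : 1 + k / M = s * z / M by rewrite EM; field; rewrite -EM.
field; rewrite hD1 hM lt0r_neq0 //.
Qed.

Lemma L4 {d P s y M : R} : 0 < d < 1 -> 0 <= P <= 1 -> 0 <= s <= 1 -> 0 < y -> 0 < M ->
  (y / (d * M)) * (P * (1 - d * (1 - s)) / (1 - (1 - P) * d * (1 - s))) <= y / ((1 - d) * d) / M.
Proof.
move=> /andP[d0 d1] /andP[P0 P1] /andP[s0 s1] y0 M0.
have a0 : 0 < 1 - d by lra.
have hPs : (1 - P) * (1 - s) <= 1 by nra.
have hD1 : 1 - d <= 1 - (1 - P) * d * (1 - s).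
  have : d * ((1 - P) * (1 - s)) <= d * 1 by apply: ler_wpM2l; lra.
  lra.
have h1 : P * (1 - d * (1 - s)) <= 1 by nra.
have -> : y / ((1 - d) * d) / M = (y / (d * M)) * (1 / (1 - d)).
  by field; rewrite !lt0r_neq0.
apply: ler_wpM2l; first by apply: divr_ge0; [lra|apply: mulr_ge0; lra].
rewrite ler_pdivrMr; last lra.
rewrite mul1r ler_pdivlMl //.
have h2 : (1 - d) * (P * (1 - d * (1 - s))) <= (1 - d) * 1 by apply: ler_wpM2l; lra.
lra.
Qed.

Lemma L5 {d P s : R} : 0 < d < 1 -> 0 <= P <= 1 -> 0 <= s <= 1 ->
  (1 - P) * (1 - d * (1 - s)) / (1 - (1 - P) * d * (1 - s)) <= 1 - Af d P + s / (1 - d) ^+ 2.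
Proof.
move=> /andP[d0 d1] /andP[P0 P1] /andP[s0 s1].
have a0 : 0 < 1 - d by lra.
have hPs : (1 - P) * (1 - s) <= 1 by nra.
have hD1 : 1 - d <= 1 - (1 - P) * d * (1 - s).
  have : d * ((1 - P) * (1 - s)) <= d * 1 by apply: ler_wpM2l; lra.
  lra.
have hDp : 1 - d <= 1 - (1 - P) * d.
  have : d * (1 - P) <= d * 1 by apply: ler_wpM2l; lra.
  lra.
have -> : (1 - P) * (1 - d * (1 - s)) / (1 - (1 - P) * d * (1 - s)) =
   1 - Af d P + (1 - P) * d * s * P / ((1 - (1 - P) * d * (1 - s)) * (1 - (1 - P) * d)).
  rewrite /Af; field; rewrite !lt0r_neq0 //; lra.
rewrite lerD2l ler_pdivrMr; last by apply: mulr_gt0; lra.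
have h1 : (1 - d) ^+ 2 <= (1 - (1 - P) * d * (1 - s)) * (1 - (1 - P) * d).
  rewrite expr2; apply: ler_pM; lra.
have h2 : s <= s / (1 - d) ^+ 2 * ((1 - (1 - P) * d * (1 - s)) * (1 - (1 - P) * d)).
  rewrite mulrAC ler_pdivlMr; last by apply: exprn_gt0.
  by apply: ler_wpM2l; lra.
have h3 : (1 - P) * d * P <= 1 by nra.
have : (1 - P) * d * P * s <= 1 * s by apply: ler_wpM2r.
have -> : (1 - P) * d * s * P = (1 - P) * d * P * s by ring.
lra.
Qed.

Lemma L5b {d P s : R} : 0 < d < 1 -> 0 <= P <= 1 -> 0 <= s <= 1 ->
  0 <= (1 - P) * (1 - d * (1 - s)) / (1 - (1 - P) * d * (1 - s)) <= 1.
Proof.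
move=> /andP[d0 d1] /andP[P0 P1] /andP[s0 s1].
have hPs : (1 - P) * (1 - s) <= 1 by nra.
have hD1 : 1 - d <= 1 - (1 - P) * d * (1 - s).
  have : d * ((1 - P) * (1 - s)) <= d * 1 by apply: ler_wpM2l; lra.
  lra.
have D10 : 0 < 1 - (1 - P) * d * (1 - s) by lra.
have D2 : 0 <= 1 - d * (1 - s) by nra.
apply/andP; split; first by apply: divr_ge0; [apply: mulr_ge0; lra | lra].
rewrite ler_pdivrMr // mul1r.
have -> : (1 - P) * (1 - d * (1 - s)) = 1 - (1 - P) * d * (1 - s) - P by ring.
lra.
Qed.

Lemma L6 {aq ap g C t : R} : 0 <= aq <= 1 -> 0 <= g <= 1 -> g <= 1 - ap + C -> 0 <= C -> 0 <= t ->
  aq * g * (1 + t) <= aq * (1 - ap) + C + t.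
Proof.
move=> /andP[aq0 aq1] /andP[g0 g1] hg C0 t0.
have h0 : aq * g <= 1 by rewrite -[leRHS]mul1r; apply: ler_pM.
have h1 : (aq * g) * t <= 1 * t by apply: ler_wpM2r.
have h2 : aq * g <= aq * (1 - ap + C) by apply: ler_wpM2l.
have h3 : aq * C <= 1 * C by apply: ler_wpM2r.
have -> : aq * g * (1 + t) = aq * g + (aq * g) * t by ring.
rewrite mulrDr in h2; lra.
Qed.

Lemma posD {d P s : R} : 0 < d < 1 -> 0 <= P <= 1 -> 0 <= s <= 1 ->
  0 < 1 - (1 - P) * d * (1 - s) /\ 0 < 1 - d * (1 - s).
Proof.
move=> /andP[d0 d1] /andP[P0 P1] /andP[s0 s1].
have hPs : (1 - P) * (1 - s) <= 1 by nra.
have : d * ((1 - P) * (1 - s)) <= d * 1 by apply: ler_wpM2l; lra.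
split; nra.
Qed.

Lemma KLalg (d k P q y z s r Uy Uz Vy M : R) :
  0 < d < 1 -> 0 <= k -> 0 <= P <= 1 -> 0 <= q <= 1 -> 0 < y -> 0 < s <= 1 -> 0 < r ->
  M = s * z - k -> 0 < M ->
  Uz * (1 - (1 - q) * d) = q * z - (1 - q) * d * k ->
  Uy * (1 - (1 - P) * d * (1 - s)) = P * y - (1 - P) * d * k + (1 - P) * d * s * Uz ->
  d * (s * z - k) <= Vy * (1 - d * (1 - s)) ->
  0 < Vy -> r * Vy <= Uy ->
  r <= y / ((1 - d) * d) / M + Af d q * (1 - Af d P) + s / (1 - d) ^+ 2 + k / M.
Proof.
move=> hd k0 hP hq y0 hs r0 EM M0 HUz HUy HVy Vy0 rV.
have /andP[d0 d1] := hd; have /andP[s0 s1] := hs.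
have hs' : 0 <= s <= 1 by apply/andP; split => //; apply: ltW.
have D1 := L5b hd hP hs'.
have [hPs D20] := posD hd hP hs'.
have S0 := L0 hd k0 hq HUz.
have S1 := L1 d0 k0 hP (ltW s0) HUy S0.
rewrite -EM in HVy.
have S2 := L2 r0 d0 M0 hPs D20 HVy rV S1.
rewrite (L3 (k:=k) d0 M0 EM) in S2; last by rewrite lt0r_neq0.
have S4 := L4 hd hP hs' y0 M0.
have S5 := L5 hd hP hs'.
have C0 : 0 <= s / (1 - d) ^+ 2 by apply: divr_ge0; [lra|apply: exprn_ge0; lra].
have kM : 0 <= k / M by apply: divr_ge0; lra.
have S6 := L6 (Af_bnd _ _ hd hq) D1 S5 C0 kM.
lra.
Qed.

Lemma L7 {ap aq e : R} : 0 <= ap <= 1 -> 0 < e -> 1 / 4 + 5 / 8 * e <= aq * (1 - ap) ->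
  ap + e / 2 <= aq.
Proof.
move=> /andP[ap0 ap1] e0 H.
rewrite leNgt; apply/negP => H2.
have : aq * (1 - ap) <= (ap + e / 2) * (1 - ap) by apply: ler_wpM2r; lra.
have : 0 <= (ap - 1 / 2) ^+ 2 by apply: sqr_ge0.
rewrite expr2; nra.
Qed.

Lemma KL (X : set R) (k d x0 : R) p r y :
  X `<=` [set x | 0 <= x] -> 0 <= k -> 0 < d < 1 -> 0 < x0 -> is_rule p ->
  (forall M : R, exists2 x, X x & M < x) ->
  1 / 4 < r <= 1 / 2 ->
  (forall y z s, x0 <= y -> X z -> 0 <= s <= 1 -> r <= Upay k d p z s y / Vopt k d z s y) ->
  x0 <= y ->
  exists z, x0 <= z /\ Af d (p y) + (r - 1 / 4) / 2 <= Af d (p z).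
Proof.
move=> HX hk hd hx0 hp Hunb /andP[r1 r2] Hr xy.
have /andP[d0 d1] := hd.
set e := r - 1 / 4.
have e0 : 0 < e by rewrite /e; lra.
have a0 : 0 < 1 - d by lra.
have a20 : 0 < (1 - d) ^+ 2 by apply: exprn_gt0.
have a21 : (1 - d) ^+ 2 <= 1 by rewrite expr2; nra.
set s := e * (1 - d) ^+ 2 / 8.
have s0 : 0 < s by rewrite /s; apply: divr_gt0 => //; apply: mulr_gt0.
have s1 : s <= 1.
  rewrite /s ler_pdivrMr //; have : e <= 1 / 4 by rewrite /e; lra.
  move=> h; have : e * (1 - d) ^+ 2 <= e * 1 by apply: ler_wpM2l; lra.
  lra.
have y0 : 0 < y by apply: lt_le_trans xy.
set Y := y / ((1 - d) * d).
have Y0 : 0 <= Y by apply: divr_ge0; [lra|apply: mulr_ge0; lra].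
set M0 := 8 * (Y + k) / e + 1.
have [z Xz hz] := Hunb (Num.max y ((M0 + k) / s)).
move: hz; rewrite gt_max => /andP[yz hz].
rewrite ltr_pdivrMr // in hz.
have z0 : 0 <= z by apply: HX.
set M := s * z - k.
have hM0 : 8 * (Y + k) / e < M by rewrite /M; rewrite /M0 in hz; lra.
have M0' : 0 < M by apply: le_lt_trans hM0; apply: divr_ge0; lra.
have hs : 0 <= s <= 1 by apply/andP; split; lra.
have HU := Upay_eq _ _ _ z _ hp hk hd hs; have HV := Vopt_eq _ _ z _ hk hd hs.
set U := Upay k d p z s in HU Hr *; set V := Vopt k d z s in HV Hr *.
have HUz := U_self _ _ _ _ _ _ _ HU z0 (lexx z).
have HUy := U_below _ _ _ _ _ _ _ HU (ltW y0) yz.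
have [Vy1 HVy _] := V_below _ _ _ _ _ _ hk hd HV (ltW y0) yz.
have Vy0 : 0 < V y by apply: lt_le_trans Vy1.
have rV : r * V y <= U y by rewrite -ler_pdivlMr //; apply: Hr.
have hs' : 0 < s <= 1 by apply/andP; split.
have r0 : 0 < r by lra.
have := KLalg _ _ _ _ _ _ _ _ _ _ _ _ hd hk (hp y) (hp z) y0 hs' r0 (erefl M) M0' HUz HUy HVy Vy0 rV.
have -> : s / (1 - d) ^+ 2 = e / 8 by rewrite /s; field; rewrite lt0r_neq0.
have hYk : Y + k <= e / 8 * M.
  rewrite ltr_pdivrMr // in hM0; lra.
have hY : Y / M <= e / 8 by rewrite ler_pdivrMr //; nra.
have hk' : k / M <= e / 8 by rewrite ler_pdivrMr //; nra.
have /andP[ap0 ap1] := Af_bnd _ _ hd (hp y).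
have /andP[aq0 aq1] := Af_bnd _ _ hd (hp z).
move=> H; exists z; split; first by apply: le_trans (ltW yz).
have H' : 1 / 4 + 5 / 8 * e <= Af d (p z) * (1 - Af d (p y)) by rewrite -/Y in H; have ee : e = r - 1 / 4 by []; lra.
by apply: L7 H'; [apply/andP; split|].
Qed.

Lemma perf_le (X : set R) (k d x0 : R) p :
  X `<=` [set x | 0 <= x] -> 0 <= k -> 0 < d < 1 -> 0 < x0 -> is_rule p ->
  (forall M : R, exists2 x, X x & M < x) ->
  (perf X k d p x0 <= (1 / 4 : R)%:E)%E.
Proof.
move=> HX hk hd hx0 hp Hunb.
have /andP[d0 d1] := hd.
rewrite leNgt; apply/negP => H.
have [r /andP[r1 r2] hr] : exists2 r : R, 1 / 4 < r <= 1 / 2 & (r%:E <= perf X k d p x0)%E.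
  move: H; case E: (perf X k d p x0) => [v| |] H.
  - rewrite lte_fin in H; exists (Num.min v (1 / 2)).
      apply/andP; split; first by rewrite lt_min H /=; lra.
      by rewrite ge_min lexx orbT.
    by rewrite lee_fin ge_min lexx.
  - by exists (1 / 2); [apply/andP; split; lra| apply: leey].
  - by [].
have Hr : forall y z s, x0 <= y -> X z -> 0 <= s <= 1 -> r <= Upay k d p z s y / Vopt k d z s y.
  move=> y z s xy Xz hs; rewrite -lee_fin.
  by move/ereal_infP: hr; apply; exists y, z, s.
have r12 : 1 / 4 < r <= 1 / 2 by apply/andP.
set e := r - 1 / 4.
have e0 : 0 < e by rewrite /e; lra.
have ind : forall n : nat, exists y, x0 <= y /\ n%:R * (e / 2) <= Af d (p y).
  elim=> [|n [y [xy hy]]].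
  - exists x0; split => //; rewrite mul0r; by have /andP[] := Af_bnd _ _ hd (hp x0).
  - have [z [xz hz]] := KL _ _ _ _ _ _ _ HX hk hd hx0 hp Hunb r12 Hr xy.
    exists z; split => //; rewrite -nat1r mulrDl mul1r; rewrite -/e in hz; lra.
have [n hn] : exists n : nat, 2 / e < n%:R.
  by exists (Num.Def.archi_bound (2 / e)); apply: archi_boundP; apply: divr_ge0; lra.
have [y [_ hy]] := ind n.
have /andP[_ a1] := Af_bnd _ _ hd (hp y).
rewrite ltr_pdivrMr // in hn.
lra.
Qed.

End S.

Theorem theorem3 (R : realType) (X : set R) (kappa delta x0 : R) (pbar : R -> R) :
  measurable X -> X `<=` [set x | 0 <= x] -> X 0 ->
  0 <= kappa -> 0 < delta < 1 -> 0 < x0 ->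
  2 * delta * kappa / (1 - delta) <= x0 ->
  is_rule pbar ->
  (forall y, x0 <= y -> pbar y = (1 - delta) / (2 - delta)) ->
  ((1 / 4 : R)%:E <= perf X kappa delta pbar x0)%E /\
  ((forall M : R, exists2 x, X x & M < x) ->
   forall p : R -> R, is_rule p -> (perf X kappa delta p x0 <= perf X kappa delta pbar x0)%E).
Proof.
move=> _ HX _ hk hd hx0 hxk hp hc.
have pa : ((1 / 4 : R)%:E <= perf X kappa delta pbar x0)%E.
  apply/ereal_infP => _ [y [z [s [xy Xz hs ->]]]].
  rewrite lee_fin; exact: (part_a_point _ _ _ _ _ _ _ _ hk hd hx0 hxk hp hc xy (HX _ Xz) hs).
split => // Hunb p hq.
apply: le_trans pa.
exact: perf_le.
Qed.
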